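(* Let $\gamma_a,\gamma_s>0$, $\lambda\ge0$, $q>0$, $\sigma_B>0$, $\varepsilon_a>0$, and let $\beta_a,\beta_s:\mathbb R\to\mathbb R$ be globally Lipschitz continuous with $\beta_a\ge0$, $\beta_s>0$. Consider the maximal solution $(T_a,T_s)$ of \[ \begin{cases} \gamma_a T_a'=-\lambda(T_a-T_s)+\varepsilon_a\sigma_B|T_s|^3T_s-2\varepsilon_a\sigma_B|T_a|^3T_a+q\beta_a(T_a),\\ \gamma_s T_s'=-\lambda(T_s-T_a)-\sigma_B|T_s|^3T_s+\varepsilon_a\sigma_B|T_a|^3T_a+q\beta_s(T_s),\\ T_a(0)=T_a^{(0)},\quad T_s(0)=T_s^{(0)} \end{cases} \] with $T_a^{(0)}\ge0$ and $T_s^{(0)}\ge0$. Then for every positive time $t$ at which the solution exists, $T_a(t)>0$ and $T_s(t)>0$. *)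

(* Defs.v *)
From Stdlib Require Import Reals.
Open Scope R_scope.

Definition globally_lipschitz (f : R -> R) : Prop :=
  exists L : R, forall x y : R, Rabs (f x - f y) <= L * Rabs (x - y).

Definition right_cont_at0 (g : R -> R) (T v : R) : Prop :=
  forall eps : R, 0 < eps -> exists delta : R, 0 < delta /\
    forall s : R, 0 <= s -> s < delta -> s < T -> Rabs (g s - v) < eps.

Definition rhs_a (ga lam q sB ea : R) (ba : R -> R) (Ta Ts : R) : R :=
  (- lam * (Ta - Ts) + ea * sB * (Rabs Ts ^ 3 * Ts)
   - 2 * ea * sB * (Rabs Ta ^ 3 * Ta) + q * ba Ta) / ga.

Definition rhs_s (gs lam q sB ea : R) (bs : R -> R) (Ta Ts : R) : R :=
  (- lam * (Ts - Ta) - sB * (Rabs Ts ^ 3 * Ts)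
   + ea * sB * (Rabs Ta ^ 3 * Ta) + q * bs Ts) / gs.

Definition is_solution_on (ga gs lam q sB ea : R) (ba bs : R -> R)
    (Ta0 Ts0 T : R) (Ta Ts : R -> R) : Prop :=
  Ta 0 = Ta0 /\ Ts 0 = Ts0 /\
  right_cont_at0 Ta T Ta0 /\ right_cont_at0 Ts T Ts0 /\
  forall t : R, 0 < t < T ->
    derivable_pt_lim Ta t (rhs_a ga lam q sB ea ba (Ta t) (Ts t)) /\
    derivable_pt_lim Ts t (rhs_s gs lam q sB ea bs (Ta t) (Ts t)).

(* Main.v *)
Require Import Defs.
From Stdlib Require Import Reals Lra Psatz.
Open Scope R_scope.

Lemma dcont (f : R -> R) x l : derivable_pt_lim f x l ->
  forall eps, 0 < eps -> exists d, 0 < d /\ forall y, Rabs (y - x) < d -> Rabs (f y - f x) < eps.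
Proof.
  intros H eps He.
  assert (C : continuity_pt f x).
  { apply derivable_continuous_pt. exists l. exact H. }
  destruct (C eps He) as [d [Hd Hy]].
  exists d; split; [lra|]. intros y Hyd.
  destruct (Req_dec x y) as [<-|Hne].
  - unfold Rminus; rewrite Rplus_opp_r, Rabs_R0; lra.
  - apply (Hy y). split; [split; [exact I|exact Hne]|exact Hyd].
Qed.

Lemma dleft (f : R -> R) x l : derivable_pt_lim f x l -> 0 < l ->
  exists d, 0 < d /\ forall y, x - d < y < x -> f y < f x.
Proof.
  intros H Hl. destruct (H l Hl) as [[d Hd] Hh]. simpl in Hh.
  exists d; split; [lra|]. intros y Hy.
  assert (Hne : y - x <> 0) by lra.
  assert (Habs : Rabs (y - x) < d) by (rewrite Rabs_left; lra).
  specialize (Hh (y - x) Hne Habs).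
  replace (x + (y - x)) with y in Hh by ring.
  apply Rabs_def2 in Hh. destruct Hh as [_ Hh].
  assert (Hq : 0 < (f y - f x) / (y - x)) by lra.
  destruct (Rlt_or_le (f y) (f x)) as [|Hge]; [assumption|].
  exfalso.
  assert (0 <= (f y - f x) * / (x - y)).
  { apply Rmult_le_pos; [lra|]. left; apply Rinv_0_lt_compat; lra. }
  unfold Rdiv in Hq. replace (/ (y - x)) with (- / (x - y)) in Hq.
  2:{ replace (y - x) with (- (x - y)) by ring. rewrite Rinv_opp. reflexivity. }
  lra.
Qed.

Lemma Lmain (f D : R -> R) a b :
  a < b -> (forall x, a < x <= b -> derivable_pt_lim f x (D x)) ->
  (forall x, a < x <= b -> f x <= 0 -> D x > 0) -> f b <= 0 ->
  forall x0, a < x0 < b -> f x0 < f b.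
Proof.
  intros Hab Hd Hs Hb x0 Hx0.
  assert (Hmin : forall m, x0 < m <= b -> (forall c, x0 <= c <= b -> f m <= f c) -> False).
  { intros m Hm Hc.
    assert (Hfm : f m <= 0) by (specialize (Hc b); lra).
    assert (HD : D m > 0) by (apply Hs; lra).
    destruct (dleft f m (D m) (Hd m ltac:(lra)) HD) as [d [Hd0 Hl]].
    set (y := Rmax x0 (m - d/2)).
    assert (Hy1 : x0 <= y) by apply Rmax_l.
    assert (Hy2 : m - d/2 <= y) by apply Rmax_r.
    assert (Hy3 : y < m) by (unfold y; apply Rmax_lub_lt; lra).
    specialize (Hl y ltac:(lra)). specialize (Hc y ltac:(lra)). lra. }
  destruct (continuity_ab_min f x0 b ltac:(lra)) as [m [Hc Hm]].
  { intros c Hc. apply derivable_continuous_pt. exists (D c). apply Hd. lra. }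
  destruct (Rle_lt_or_eq_dec x0 m (proj1 Hm)) as [Hlt|Heq].
  - exfalso. apply (Hmin m); [lra|exact Hc].
  - subst m. assert (f x0 <= f b) by (apply Hc; lra).
    destruct (Rle_lt_or_eq_dec _ _ H) as [|Heq]; [assumption|].
    exfalso. apply (Hmin b); [lra|]. intros c Hc'. rewrite <- Heq. apply Hc; exact Hc'.
Qed.

Lemma PL (f D : R -> R) f0 T b : 0 <= f0 -> 0 < b -> b < T ->
  right_cont_at0 f T f0 ->
  (forall x, 0 < x <= b -> derivable_pt_lim f x (D x)) ->
  (forall x, 0 < x <= b -> f x <= 0 -> D x > 0) ->
  forall x, 0 < x <= b -> 0 < f x.
Proof.
  intros H0 Hb HT Hrc Hd Hs x Hx.
  destruct (Rlt_or_le 0 (f x)) as [|Hle]; [assumption|exfalso].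
  assert (H1 : f (x/2) < f x).
  { apply (Lmain f D 0 x); try lra.
    - intros y Hy; apply Hd; lra.
    - intros y Hy; apply Hs; lra. }
  assert (H2 : forall y, 0 < y < x/2 -> f y < f (x/2)).
  { apply (Lmain f D 0 (x/2)); try lra.
    - intros y Hy; apply Hd; lra.
    - intros y Hy; apply Hs; lra. }
  destruct (Hrc (- f (x/2)) ltac:(lra)) as [d [Hd0 Hy]].
  set (y := Rmin (d/2) (x/4)).
  assert (y <= d/2) by apply Rmin_l. assert (y <= x/4) by apply Rmin_r.
  assert (0 < y) by (unfold y; apply Rmin_glb_lt; lra).
  specialize (Hy y ltac:(lra) ltac:(lra) ltac:(lra)).
  specialize (H2 y ltac:(lra)).
  apply Rabs_def2 in Hy. lra.
Qed.

Lemma p4_nonneg x : 0 <= x -> 0 <= Rabs x ^ 3 * x.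
Proof. intros; rewrite Rabs_pos_eq by lra; simpl; nra. Qed.
Lemma p4_pos x : 0 < x -> 0 < Rabs x ^ 3 * x.
Proof. intros; rewrite Rabs_pos_eq by lra; simpl.
  assert (0 < x*x) by nra. assert (0 < x*(x*x)) by nra. nra. Qed.
Lemma p4_nonpos x : x <= 0 -> Rabs x ^ 3 * x <= 0.
Proof. intros; rewrite Rabs_left1 by lra; simpl.
  assert (0 <= -x*(-x)) by nra. assert (0 <= -x*(-x*(-x))) by nra. nra. Qed.
Lemma p4_low x e : 0 < e -> e <= 1 -> -e < x -> -e <= Rabs x ^ 3 * x.
Proof. intros He He1 Hx. destruct (Rle_or_lt 0 x).
  - pose proof (p4_nonneg x H); lra.
  - rewrite Rabs_left by lra; simpl. set (a := -x).
    replace x with (-a) by (unfold a; ring).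
    assert (0 < a < 1) by (unfold a; lra).
    assert (a*a <= 1) by nra. assert (a*(a*a) <= 1) by nra.
    assert (a*(a*(a*1))*a <= a) by nra. unfold a in *; nra.
Qed.

Lemma P1 gs lam q sB ea bs Ta Ts : 0 < gs -> 0 <= lam -> 0 < q -> 0 < sB -> 0 < ea ->
  0 < bs Ts -> Ts <= 0 -> 0 <= Ta -> rhs_s gs lam q sB ea bs Ta Ts > 0.
Proof.
  intros. unfold rhs_s. apply Rdiv_lt_0_compat; [|lra].
  pose proof (p4_nonpos Ts ltac:(lra)). pose proof (p4_nonneg Ta ltac:(lra)).
  assert (0 <= lam * Ta) by nra. assert (0 <= - lam * Ts) by nra.
  assert (0 <= sB * (-(Rabs Ts ^ 3 * Ts))) by nra.
  assert (0 <= ea * sB * (Rabs Ta ^ 3 * Ta)).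
  { apply Rmult_le_pos; [nra|lra]. }
  assert (0 < q * bs Ts) by nra. nra.
Qed.

Lemma P2 ga lam q sB ea ba Ta Ts : 0 < ga -> 0 <= lam -> 0 < q -> 0 < sB -> 0 < ea ->
  0 <= ba Ta -> Ta <= 0 -> 0 < Ts -> rhs_a ga lam q sB ea ba Ta Ts > 0.
Proof.
  intros. unfold rhs_a. apply Rdiv_lt_0_compat; [|lra].
  pose proof (p4_nonpos Ta ltac:(lra)). pose proof (p4_pos Ts ltac:(lra)).
  assert (0 <= - lam * (Ta - Ts)) by nra.
  assert (0 < ea * sB * (Rabs Ts ^ 3 * Ts)).
  { apply Rmult_lt_0_compat; [nra|lra]. }
  assert (0 <= 2 * ea * sB * (-(Rabs Ta ^ 3 * Ta))).
  { apply Rmult_le_pos; [nra|lra]. }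
  assert (0 <= q * ba Ta) by nra. nra.
Qed.

Lemma P1init gs lam q sB ea bs Ls Ta Ts e : 0 < gs -> 0 <= lam -> 0 < q -> 0 < sB -> 0 < ea ->
  (forall x y, Rabs (bs x - bs y) <= Ls * Rabs (x - y)) -> 0 < e -> e <= 1 ->
  e * (q * Rabs Ls + lam + ea * sB + 1) <= q * bs 0 / 2 -> 0 < bs 0 ->
  Ts <= 0 -> -e < Ts -> -e < Ta -> rhs_s gs lam q sB ea bs Ta Ts > 0.
Proof.
  intros. unfold rhs_s. apply Rdiv_lt_0_compat; [|lra].
  pose proof (p4_nonpos Ts ltac:(lra)). pose proof (p4_low Ta e ltac:(lra) ltac:(lra) ltac:(lra)).
  assert (HL := H4 Ts 0). rewrite Rminus_0_r in HL. rewrite (Rabs_left1 Ts) in HL by lra.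
  pose proof (Rle_abs (-(bs Ts - bs 0))); rewrite Rabs_Ropp in *.
  assert (Ls * - Ts <= Rabs Ls * e).
  { destruct (Rle_or_lt 0 Ls). rewrite Rabs_pos_eq by lra. nra.
    rewrite Rabs_left by lra. nra. }
  assert (0 <= Rabs Ls) by apply Rabs_pos.
  assert (- lam * (Ts - Ta) >= - lam * e) by nra.
  assert (0 <= sB * (-(Rabs Ts ^ 3 * Ts))) by nra.
  assert (ea * sB * (Rabs Ta ^ 3 * Ta) >= - (ea * sB) * e).
  { assert (0 < ea * sB) by nra. nra. }
  assert (q * bs Ts >= q * bs 0 - q * (Rabs Ls * e)) by nra.
  nra.
Qed.

Theorem lemma4p1 (ga gs lam q sB ea : R) (ba bs : R -> R)
    (Ta0 Ts0 T : R) (Ta Ts : R -> R)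
    (hga : 0 < ga) (hgs : 0 < gs) (hlam : 0 <= lam) (hq : 0 < q)
    (hsB : 0 < sB) (hea : 0 < ea)
    (hba_lip : globally_lipschitz ba) (hbs_lip : globally_lipschitz bs)
    (hba : forall x : R, 0 <= ba x) (hbs : forall x : R, 0 < bs x)
    (hTa0 : 0 <= Ta0) (hTs0 : 0 <= Ts0)
    (hsol : is_solution_on ga gs lam q sB ea ba bs Ta0 Ts0 T Ta Ts) :
  forall t : R, 0 < t < T -> 0 < Ta t /\ 0 < Ts t.
Proof.
  intros t Ht.
  destruct hsol as [HA0 [HS0 [rcA [rcS hder]]]].
  destruct hbs_lip as [Ls HLs].
  pose proof (hbs 0) as Hb0.
  set (K := q * Rabs Ls + lam + ea * sB + 1).
  assert (HK : 0 < K).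
  { unfold K. pose proof (Rabs_pos Ls). assert (0 <= q * Rabs Ls) by nra.
    assert (0 < ea * sB) by nra. lra. }
  set (e := Rmin 1 (q * bs 0 / (2 * K))).
  assert (He1 : e <= 1) by apply Rmin_l.
  assert (He2 : e <= q * bs 0 / (2 * K)) by apply Rmin_r.
  assert (He0 : 0 < e).
  { unfold e. apply Rmin_glb_lt; [lra|]. apply Rdiv_lt_0_compat; nra. }
  assert (HeK : e * K <= q * bs 0 / 2).
  { apply Rmult_le_compat_r with (r := K) in He2; [|lra].
    replace (q * bs 0 / (2 * K) * K) with (q * bs 0 / 2) in He2 by (field; lra).
    exact He2. }
  destruct (rcS e He0) as [dS [HdS HS]].
  destruct (rcA e He0) as [dA [HdA HA]].
  set (b0 := Rmin (Rmin dS dA) T / 2).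
  assert (Hm1 : Rmin (Rmin dS dA) T <= Rmin dS dA) by apply Rmin_l.
  assert (Hm2 : Rmin (Rmin dS dA) T <= T) by apply Rmin_r.
  assert (Hm3 : Rmin dS dA <= dS) by apply Rmin_l.
  assert (Hm4 : Rmin dS dA <= dA) by apply Rmin_r.
  assert (Hm0 : 0 < Rmin (Rmin dS dA) T).
  { apply Rmin_glb_lt; [apply Rmin_glb_lt|]; lra. }
  assert (Hb0p : 0 < b0) by (unfold b0; lra).
  assert (Hb0S : b0 < dS) by (unfold b0; lra).
  assert (Hb0A : b0 < dA) by (unfold b0; lra).
  assert (Hb0T : b0 < T) by (unfold b0; lra).
  assert (HinitS : forall x, 0 < x <= b0 -> 0 < Ts x).
  { apply (PL Ts (fun x => rhs_s gs lam q sB ea bs (Ta x) (Ts x)) Ts0 T b0); try lra.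
    - exact rcS.
    - intros x Hx. apply (hder x). lra.
    - intros x Hx Hle.
      specialize (HS x ltac:(lra) ltac:(lra) ltac:(lra)).
      specialize (HA x ltac:(lra) ltac:(lra) ltac:(lra)).
      apply Rabs_def2 in HS. apply Rabs_def2 in HA.
      apply (P1init gs lam q sB ea bs Ls (Ta x) (Ts x) e); try lra; auto. }
  assert (HinitA : forall x, 0 < x <= b0 -> 0 < Ta x).
  { apply (PL Ta (fun x => rhs_a ga lam q sB ea ba (Ta x) (Ts x)) Ta0 T b0); try lra.
    - exact rcA.
    - intros x Hx. apply (hder x). lra.
    - intros x Hx Hle. apply P2; auto. }
  destruct (Rle_or_lt t b0) as [Htb|Htb].
  { split; [apply HinitA|apply HinitS]; lra. }
  set (E := fun x => b0 <= x <= t /\ forall u, 0 < u <= x -> 0 < Ta u /\ 0 < Ts u).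
  assert (HEb : bound E).
  { exists t. intros x [Hx _]. lra. }
  assert (HEn : exists x, E x).
  { exists b0. split; [lra|]. intros u Hu. split; [apply HinitA|apply HinitS]; lra. }
  destruct (completeness E HEb HEn) as [s [Hub Hlub]].
  assert (Hs1 : b0 <= s).
  { apply Hub. split; [lra|]. intros u Hu. split; [apply HinitA|apply HinitS]; lra. }
  assert (Hs2 : s <= t).
  { apply Hlub. intros x [Hx _]. lra. }
  assert (Hi : forall u, 0 < u < s -> 0 < Ta u /\ 0 < Ts u).
  { intros u Hu.
    destruct (Rlt_le_dec 0 (Ta u)) as [HaP|HaN];
    [destruct (Rlt_le_dec 0 (Ts u)) as [HsP|HsN]; [auto|]|].
    all: exfalso.
    all: assert (Hubu : is_upper_bound E u) by
      (intros x [Hx Hx2]; destruct (Rle_or_lt x u) as [|Hlt]; [assumption|];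
       specialize (Hx2 u ltac:(lra)); lra).
    all: specialize (Hlub u Hubu); lra. }
  assert (HsT : 0 < s < T) by lra.
  destruct (hder s HsT) as [DA DS].
  set (y := fun d => s - Rmin d s / 2).
  assert (Hy : forall d, 0 < d -> 0 < y d < s /\ Rabs (y d - s) < d /\ s - d < y d).
  { intros d Hd. assert (Rmin d s <= d) by apply Rmin_l. assert (Rmin d s <= s) by apply Rmin_r.
    assert (0 < Rmin d s) by (apply Rmin_glb_lt; lra).
    unfold y. split; [lra|]. rewrite Rabs_left by lra. lra. }
  assert (Hii : 0 <= Ta s).
  { destruct (Rlt_or_le (Ta s) 0) as [Hn|]; [exfalso|assumption].
    destruct (dcont Ta s _ DA (- Ta s) ltac:(lra)) as [d [Hd Hc]].
    destruct (Hy d Hd) as [Hy1 [Hy2 Hy3]].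
    specialize (Hc (y d) Hy2). apply Rabs_def2 in Hc.
    specialize (Hi (y d) Hy1). lra. }
  assert (Hiii : 0 < Ts s).
  { destruct (Rlt_or_le 0 (Ts s)) as [|Hn]; [assumption|exfalso].
    assert (Hp := P1 gs lam q sB ea bs (Ta s) (Ts s) hgs hlam hq hsB hea (hbs _) Hn Hii).
    destruct (dleft Ts s _ DS Hp) as [d [Hd Hl]].
    destruct (Hy d Hd) as [Hy1 [Hy2 Hy3]].
    specialize (Hl (y d) ltac:(lra)). specialize (Hi (y d) Hy1). lra. }
  assert (Hiv : 0 < Ta s).
  { destruct (Rlt_or_le 0 (Ta s)) as [|Hn]; [assumption|exfalso].
    assert (Hp := P2 ga lam q sB ea ba (Ta s) (Ts s) hga hlam hq hsB hea (hba _) Hn Hiii).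
    destruct (dleft Ta s _ DA Hp) as [d [Hd Hl]].
    destruct (Hy d Hd) as [Hy1 [Hy2 Hy3]].
    specialize (Hl (y d) ltac:(lra)). specialize (Hi (y d) Hy1). lra. }
  destruct (Rlt_or_le s t) as [Hst|Hst].
  2:{ replace t with s by lra. auto. }
  exfalso.
  destruct (dcont Ta s _ DA (Ta s) Hiv) as [d1 [Hd1 Hc1]].
  destruct (dcont Ts s _ DS (Ts s) Hiii) as [d2 [Hd2 Hc2]].
  set (d := Rmin d1 d2).
  assert (d <= d1) by apply Rmin_l. assert (d <= d2) by apply Rmin_r.
  assert (0 < d) by (apply Rmin_glb_lt; lra).
  set (x := Rmin (s + d/2) t).
  assert (x <= s + d/2) by apply Rmin_l. assert (x <= t) by apply Rmin_r.
  assert (s < x) by (apply Rmin_glb_lt; lra).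
  assert (HEx : E x).
  { split; [lra|]. intros u Hu.
    destruct (Rlt_or_le u s) as [Hus|Hus]; [apply Hi; lra|].
    assert (Rabs (u - s) < d) by (rewrite Rabs_pos_eq; lra).
    specialize (Hc1 u ltac:(lra)). specialize (Hc2 u ltac:(lra)).
    apply Rabs_def2 in Hc1. apply Rabs_def2 in Hc2. lra. }
  specialize (Hub x HEx). lra.
Qed.
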